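(* For the localized tent shears described in the context, the projective process $(\phi_n(x),D_x\phi_nu/|D_x\phi_nu|)$ on $\mathbb T^2\times\mathbb P^1$ is irreducible.
   Context: Let $F_0$ be the $1$-periodic piecewise linear function with $F_0(\frac12\pm\frac18)=0$, $F_0(\frac12)=1$, linear on $[\frac38,\frac12]$ and $[\frac12,\frac58]$, and zero on $[0,1]\setminus[\frac38,\frac58]$; $F_\alpha(x)=F_0(x-\alpha)$; $v_{\alpha,1}(x)=(F_\alpha(x_2),0)$, $v_{\alpha,2}(x)=(0,F_\alpha(x_1))$ on $\mathbb T^2$. Let $(\alpha_n,\beta_n,i_n)_{n\ge1}$ be i.i.d. uniform on $[0,1]\times[0,1]\times\{1,2\}$, $V_n=\beta_nv_{\alpha_n,i_n}$, $\varphi^w$ the time-1 flow of $w$, and $\phi_n=\varphi^{V_n}\circ\cdots\circ\varphi^{V_1}$. $\mathbb P^1$ is the space of lines through the origin in $\mathbb R^2$. A Markov chain on state space $E$ is irreducible if for every $z\in E$ and nonempty open $O\subseteq E$ there is $n$ with $\mathbb P(Z_n\in O\mid Z_0=z)>0$. *)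

(* Defs.v *)
From HB Require Import structures.
From mathcomp Require Import all_boot all_order all_algebra.
From mathcomp Require Import all_classical all_reals all_analysis.
Set Implicit Arguments. Unset Strict Implicit. Unset Printing Implicit Defensive.
Import Order.TTheory GRing.Theory Num.Theory.
Import numFieldNormedType.Exports.
Local Open Scope classical_set_scope.
Local Open Scope ring_scope.

Section Defs.
Variable R : realType.

Definition frac (y : R) : R := y - (Num.floor y)%:~R.

Definition F0 (y : R) : R := Num.max 0 (1 - 8 * `|frac y - 2^-1|).

(* its derivative (right derivative convention at the three kinks, a null set) *)
Definition dF0 (y : R) : R :=
  let t := frac y in
  if (3 / 8 <= t) && (t < 2^-1) then 8
  else if (2^-1 <= t) && (t < 5 / 8) then -8 else 0.

Definition Fa (a y : R) : R := F0 (y - a).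
Definition dFa (a y : R) : R := dF0 (y - a).

(* A state (x, v) : R^2 x R^2 is a lift of (x mod Z^2, [v]) in T^2 x P^1.
   step a b i applies the time-1 flow of V = b * v_{a,i} (i = true <-> i = 1,
   i = false <-> i = 2) to the position x (a shear, lifted to R^2) and its
   Jacobian at x to the tangent vector v. *)
Definition step (a b : R) (i : bool) (p : (R * R) * (R * R)) : (R * R) * (R * R) :=
  let x := p.1 in let v := p.2 in
  if i then ((x.1 + b * Fa a x.2, x.2), (v.1 + b * dFa a x.2 * v.2, v.2))
  else ((x.1, x.2 + b * Fa a x.1), (v.1, v.2 + b * dFa a x.1 * v.1)).

(* Z n = (phi_n(x), D_x phi_n u), a lift of the projective process at time n *)
Fixpoint proj_process (alpha beta : nat -> R) (idx : nat -> bool)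
    (z0 : (R * R) * (R * R)) (n : nat) : (R * R) * (R * R) :=
  match n with
  | 0 => z0
  | k.+1 => step (alpha k) (beta k) (idx k) (proj_process alpha beta idx z0 k)
  end.

(* open subsets of T^2 x P^1, described as their (saturated) preimages in
   R^2 x (R^2 \ {0}) under the quotient map (x, v) |-> (x mod Z^2, [v]) *)
Definition open_TP (O : set ((R * R) * (R * R))) : Prop :=
  [/\ open O,
      O `<=` [set p | p.2 != (0, 0)] &
      forall (x v : R * R) (m1 m2 : int) (l : R), l != 0 ->
        O (x, v) <-> O ((x.1 + m1%:~R, x.2 + m2%:~R), (l * v.1, l * v.2))].

Definition unif_bool (C : set bool) : R :=
  ((`[< C true >])%:R + (`[< C false >])%:R) / 2.

(* (alpha_k, beta_k, i_k)_k i.i.d. uniform on [0,1] x [0,1] x {1,2}: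
   measurable, and the finite-dimensional distributions are the product ones
   (product rule on all measurable rectangles). *)
Definition iid_uniform d (Omega : measurableType d) (P : probability Omega R)
    (alpha beta : nat -> Omega -> R) (idx : nat -> Omega -> bool) : Prop :=
  [/\ forall k, measurable_fun setT (alpha k),
      forall k, measurable_fun setT (beta k),
      forall k, measurable_fun setT (idx k) &
      forall (n : nat) (A B : nat -> set R) (C : nat -> set bool),
        (forall k, measurable (A k)) -> (forall k, measurable (B k)) ->
        P (\bigcap_(k in `I_n)
              [set w | A k (alpha k w) /\ B k (beta k w) /\ C k (idx k w)])
        = (\prod_(k < n)
             (fine (lebesgue_measure (A k `&` `[0, 1]))
              * fine (lebesgue_measure (B k `&` `[0, 1]))
              * unif_bool (C k)))%:E].

End Defs.

(* Main.v *)
Require Import Defs.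
From HB Require Import structures.
From mathcomp Require Import all_boot all_order all_algebra.
From mathcomp Require Import all_classical all_reals all_analysis.
From mathcomp Require Import ring lra.
Import Order.TTheory GRing.Theory Num.Theory.
Import numFieldNormedType.Exports.
Local Open Scope classical_set_scope.
Local Open Scope ring_scope.
Set Implicit Arguments. Unset Strict Implicit. Unset Printing Implicit Defensive.
From mathcomp Require Import measurable_realfun.
Section A.
Variable R : realType.
Local Notation frac := (@Defs.frac R).

Lemma frac_bounds (z : R) : 0 <= frac z < 1.
Proof.
rewrite /frac; have /andP[h1 h2] := floor_itv z.
rewrite intrD in h2; apply/andP; split; lra.
Qed.

Lemma frac_addz (t : R) (m : int) : 0 <= t < 1 -> frac (t + m%:~R) = t.
Proof.
move=> /andP[t0 t1]; rewrite /frac.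
have -> : Num.floor (t + m%:~R) = m.
  apply: floor_def; rewrite intrD; apply/andP; split; lra.
by rewrite addrK.
Qed.

Lemma frac_decomp (z : R) : z = frac z + (Num.floor z)%:~R.
Proof. by rewrite /frac subrK. Qed.

Lemma frac_near (z z0 r : R) : `|z - z0| <= r -> r <= frac z0 -> frac z0 + r < 1 ->
  frac z = frac z0 + (z - z0).
Proof.
move=> hz hr1 hr2.
have hz' : z = (frac z0 + (z - z0)) + (Num.floor z0)%:~R.
  by rewrite /Defs.frac; ring.
rewrite {1}hz' frac_addz //; move: hz; rewrite ler_norml => /andP[h1 h2].
apply/andP; split; lra.
Qed.

Lemma Fa_up (a y t : R) : frac (y - a) = t -> 3/8 <= t -> t < 2^-1 ->
  Fa a y = 8 * t - 3 /\ dFa a y = 8.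
Proof.
move=> ft h1 h2; rewrite /Fa /dFa /F0 /dF0 ft; split.
  rewrite ltr0_norm; last lra.
  by rewrite max_r; lra.
by rewrite h1 h2.
Qed.

Lemma Fa_dn (a y t : R) : frac (y - a) = t -> 2^-1 <= t -> t < 5/8 ->
  Fa a y = 5 - 8 * t /\ dFa a y = -8.
Proof.
move=> ft h1 h2; rewrite /Fa /dFa /F0 /dF0 ft; split.
  rewrite ger0_norm; last lra.
  by rewrite max_r; lra.
have -> : (t < 2^-1) = false by apply/negbTE; rewrite -leNgt.
by rewrite andbF h1 h2.
Qed.
Definition tz (s : bool) : R := if s then 7/16 else 9/16.
Definition mvk (i : bool) (k : R) (p : (R*R)*(R*R)) : (R*R)*(R*R) :=
  if i then ((p.1.1 + `|k|/16, p.1.2), (p.2.1 + k * p.2.2, p.2.2))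
  else ((p.1.1, p.1.2 + `|k|/16), (p.2.1, p.2.2 + k * p.2.1)).
Definition a0of (i : bool) (k : R) (p : (R*R)*(R*R)) : R :=
  frac ((if i then p.1.2 else p.1.1) - tz (0 <= k)).
Definition close (e : R) (p q : (R*R)*(R*R)) :=
  [/\ `|p.1.1 - q.1.1| <= e, `|p.1.2 - q.1.2| <= e,
      `|p.2.1 - q.2.1| <= e & `|p.2.2 - q.2.2| <= e].

Lemma tz_bounds s : 7/16 <= tz s <= 9/16.
Proof. by case: s; rewrite /tz; apply/andP; split; lra. Qed.

Lemma frac_a0 (c t : R) : 0 <= t < 1 -> frac (c - frac (c - t)) = t.
Proof.
move=> ht.
have -> : c - frac (c - t) = t + (Num.floor (c - t))%:~R by rewrite /Defs.frac; ring.
exact: frac_addz.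
Qed.

Lemma step_close_true e M a b k p p0 :
  0 <= e -> e <= 1/64 -> `|k| <= 8 -> `|p0.2.2| <= M ->
  `|a - a0of true k p0| <= e -> `|b - `|k|/8| <= e -> close e p p0 ->
  close ((8*M+18)*e) (step a b true p) (mvk true k p0).
Proof.
case: p p0 => [[x1 x2] [v1 v2]] [[y1 y2] [w1 w2]] /=.
rewrite /a0of /= => e0 e1 hk hM ha hb [/= h1 h2 h3 h4].
have hz0 : frac (y2 - frac (y2 - tz (0 <= k))) = tz (0 <= k).
  apply: frac_a0; have := tz_bounds (0 <= k); move=> /andP[? ?]; apply/andP; split; lra.
set a0 := frac (y2 - tz (0 <= k)) in ha hz0.
have hz : frac (x2 - a) = tz (0 <= k) + ((x2 - a) - (y2 - a0)).
  rewrite -hz0; apply: (@frac_near _ _ (1/32)).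
  - have -> : x2 - a - (y2 - a0) = (x2 - y2) - (a - a0) by ring.
    apply: le_trans (ler_normB _ _) _; lra.
  - rewrite hz0; have := tz_bounds (0 <= k); move=> /andP[? ?]; lra.
  - rewrite hz0; have := tz_bounds (0 <= k); move=> /andP[? ?]; lra.
move: h1 h2 h3 h4 hb ha hM hk; rewrite /close /= !ler_norml.
move=> /andP[h1 h1'] /andP[h2 h2'] /andP[h3 h3'] /andP[h4 h4'] /andP[hb hb'] /andP[ha ha'] /andP[hM hM'] /andP[hk hk'].
set dz := (x2 - a) - (y2 - a0) in hz.
have hdz : -(1/32) <= dz <= 1/32 by rewrite /dz; apply/andP; split; lra.
move: hdz => /andP[hd hd'].
rewrite /tz in hz; case: (lerP 0 k) hz => hk0 hz.
- have [-> ->] := Fa_up hz ltac:(lra) ltac:(lra).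
  rewrite ger0_norm // in hb hb' *.
  have hdz1 : - (2*e) <= dz <= 2 * e by rewrite /dz; apply/andP; split; lra.
  move: hdz1 => /andP[g1 g2].
  split; apply/andP; split; try lra; nra.
- have [-> ->] := Fa_dn hz ltac:(lra) ltac:(lra).
  rewrite ltr0_norm // in hb hb' *.
  have hdz1 : - (2*e) <= dz <= 2 * e by rewrite /dz; apply/andP; split; lra.
  move: hdz1 => /andP[g1 g2].
  split; apply/andP; split; try lra; nra.
Qed.
End A.
Section B.
Variable R : realType.
Local Notation frac := (@Defs.frac R).
Definition sw (p : (R*R)*(R*R)) : (R*R)*(R*R) := ((p.1.2, p.1.1), (p.2.2, p.2.1)).

Lemma step_close (e M a b : R) (i : bool) (k : R) (p p0 : (R*R)*(R*R)) :
  0 <= e -> e <= 1/64 -> `|k| <= 8 -> `|p0.2.1| <= M -> `|p0.2.2| <= M ->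
  `|a - a0of i k p0| <= e -> `|b - `|k|/8| <= e -> close e p p0 ->
  close ((8*M+18)*e) (step a b i p) (mvk i k p0).
Proof.
move=> e0 e1 hk hM1 hM2 ha hb hc; case: i ha => ha.
  exact: step_close_true.
move: hc ha hM1 hM2.
case: p => [[x1 x2] [v1 v2]]; case: p0 => [[y1 y2] [w1 w2]] /= [/= h1 h2 h3 h4] ha hM1 hM2.
have := @step_close_true R e M a b k (sw ((x1,x2),(v1,v2))) (sw ((y1,y2),(w1,w2))) e0 e1 hk hM1 ha hb.
move=> /(_ ltac:(by split)) [/= g1 g2 g3 g4]; by split.
Qed.
End B.
Section C.
Variable R : realType.
Local Notation frac := (@Defs.frac R).
Definition run (ms : seq (bool * R)) (p : (R*R)*(R*R)) :=
  foldl (fun q m => mvk m.1 m.2 q) p ms.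
Definition exs (ms : seq (bool * R)) p n := run (take n ms) p.

Lemma exsS ms p n : (n < size ms)%N ->
  exs ms p n.+1 = mvk (nth (true, 0) ms n).1 (nth (true, 0) ms n).2 (exs ms p n).
Proof. by move=> hn; rewrite /exs (take_nth (true,0) hn) /run foldl_rcons. Qed.

Lemma chain (ms : seq (bool * R)) (p0 : (R*R)*(R*R)) (M d : R)
   (al be : nat -> R) (id : nat -> bool) (n : nat) :
  0 <= M -> 0 <= d ->
  (forall j, (j < size ms)%N -> `|(nth (true,0) ms j).2| <= 8) ->
  (forall j, (j < size ms)%N -> `|(exs ms p0 j).2.1| <= M /\ `|(exs ms p0 j).2.2| <= M) ->
  (forall j, (j < size ms)%N -> (8*M+18)^+j * d <= 1/64) ->
  (forall j, (j < n)%N ->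
     [/\ `|al j - a0of (nth (true,0) ms j).1 (nth (true,0) ms j).2 (exs ms p0 j)| <= d,
         `|be j - `|(nth (true,0) ms j).2|/8| <= d &
         id j = (nth (true,0) ms j).1]) ->
  (n <= size ms)%N ->
  close ((8*M+18)^+n * d) (proj_process al be id p0 n) (exs ms p0 n).
Proof.
move=> M0 d0 hk hM hsmall hpar.
elim: n hpar => [|n IH] hpar hn.
  rewrite expr0 mul1r /exs take0 /=.
  by split; rewrite subrr normr0.
have hn' : (n < size ms)%N by [].
have C1 : 1 <= 8*M+18 by lra.
have hCn : 1 <= (8*M+18)^+n by rewrite exprn_ege1.
have [ha hb hi] := hpar n (ltnSn n).
rewrite /= exsS // hi exprS -mulrA.
have [hM1 hM2] := hM n hn'.
apply: step_close => //.
- by apply: mulr_ge0 => //; apply: exprn_ge0; lra.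
- exact: hsmall.
- exact: hk.
- apply: le_trans ha _; rewrite -[X in X <= _]mul1r; apply: ler_wpM2r => //.
- apply: le_trans hb _; rewrite -[X in X <= _]mul1r; apply: ler_wpM2r => //.
- apply: IH => //; first by move=> j hj; apply: hpar; apply: ltn_trans hj _.
  by apply: ltnW.
Qed.
End C.
Section D.
Variable R : realType.
Local Notation frac := (@Defs.frac R).

Lemma D1 (p : (R*R)*(R*R)) : p.2 != (0,0) ->
  exists i k c, `|k| <= 2 /\ c != 0 /\ (mvk i k p).2 = (c, c).
Proof.
case: p => x [u1 u2] /= hu.
have [h|h] := lerP `|u1| `|u2|.
- have u20 : u2 != 0.
    apply: contraNneq hu => u20; subst u2; move: h; rewrite normr0 normr_le0 => /eqP h1.
    by subst u1.
  exists true, (1 - u1/u2), u2; split; last split => //.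
  + apply: le_trans (ler_normB _ _) _; rewrite normr1 normrM normfV.
    have : `|u1| / `|u2| <= 1 by rewrite ler_pdivrMr ?normr_gt0 // mul1r.
    lra.
  + rewrite /mvk /=; congr (_, _); field; exact: u20.
- have u10 : u1 != 0.
    by apply: contraTneq h => ->; rewrite normr0 -leNgt normr_ge0.
  exists false, (1 - u2/u1), u1; split; last split => //.
  + apply: le_trans (ler_normB _ _) _; rewrite normr1 normrM normfV.
    have : `|u2| / `|u1| <= 1 by rewrite ler_pdivrMr ?normr_gt0 // mul1r ltW.
    lra.
  + rewrite /mvk /=; congr (_, _); field; exact: u10.
Qed.

Lemma D2 (x : R*R) (c w1 w2 : R) : c != 0 -> (w1, w2) != (0,0) ->
  exists i k l, `|k| <= 2 /\ l != 0 /\ (mvk i k (x, (c,c))).2 = (l * w1, l * w2).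
Proof.
move=> c0 hw.
have [h|h] := lerP `|w1| `|w2|.
- have w20 : w2 != 0.
    apply: contraNneq hw => w20; subst w2; move: h; rewrite normr0 normr_le0 => /eqP h1.
    by subst w1.
  exists true, (w1/w2 - 1), (c/w2); split; last split.
  + apply: le_trans (ler_normB _ _) _; rewrite normr1 normrM normfV.
    have : `|w1| / `|w2| <= 1 by rewrite ler_pdivrMr ?normr_gt0 // mul1r.
    lra.
  + by rewrite mulf_neq0 // invr_eq0.
  + rewrite /mvk /=; congr (_, _); field; exact: w20.
- have w10 : w1 != 0.
    by apply: contraTneq h => ->; rewrite normr0 -leNgt normr_ge0.
  exists false, (w2/w1 - 1), (c/w1); split; last split.
  + apply: le_trans (ler_normB _ _) _; rewrite normr1 normrM normfV.
    have : `|w2| / `|w1| <= 1 by rewrite ler_pdivrMr ?normr_gt0 // mul1r ltW.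
    lra.
  + by rewrite mulf_neq0 // invr_eq0.
  + rewrite /mvk /=; congr (_, _); field; exact: w10.
Qed.

Lemma P1 (b : R) (p : (R*R)*(R*R)) : 0 <= b ->
  run [:: (true, 8*b); (true, -(8*b))] p = ((p.1.1 + b, p.1.2), p.2).
Proof.
case: p => [[x1 x2] [v1 v2]] b0 /=; rewrite /run /= /mvk /= normrN ger0_norm; last lra.
by congr ((_, _), (_, _)); field.
Qed.

Lemma P2 (b : R) (p : (R*R)*(R*R)) : 0 <= b ->
  run [:: (false, 8*b); (false, -(8*b))] p = ((p.1.1, p.1.2 + b), p.2).
Proof.
case: p => [[x1 x2] [v1 v2]] b0 /=; rewrite /run /= /mvk /= normrN ger0_norm; last lra.
by congr ((_, _), (_, _)); field.
Qed.

Lemma run_cat ms1 ms2 (p : (R*R)*(R*R)) : run (ms1 ++ ms2) p = run ms2 (run ms1 p).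
Proof. by rewrite /run foldl_cat. Qed.

Lemma plan (x u y w : R * R) : u != (0,0) -> w != (0,0) ->
  exists ms : seq (bool * R),
    (forall j, (j < size ms)%N -> `|(nth (true,0) ms j).2| <= 8) /\
    exists (m1 m2 : int) (l : R), l != 0 /\
      run ms (x, u) = ((y.1 + m1%:~R, y.2 + m2%:~R), (l * w.1, l * w.2)).
Proof.
move=> hu hw.
have [i1 [k1 [c [hk1 [c0 e1]]]]] := D1 (p := (x, u)) hu.
set p1 := mvk i1 k1 (x, u).
have e1' : p1 = (p1.1, (c, c)) by rewrite -e1; apply: surjective_pairing.
case: w hw => w1 w2 hw.
have [i2 [k2 [l [hk2 [l0 e2]]]]] := D2 p1.1 c0 hw.
set p2 := mvk i2 k2 (p1.1, (c, c)) in e2.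
set b1 := frac (y.1 - p2.1.1).
set b2 := frac (y.2 - p2.1.2).
have /andP[b10 b11] : 0 <= b1 < 1 by apply: frac_bounds.
have /andP[b20 b21] : 0 <= b2 < 1 by apply: frac_bounds.
exists ([:: (i1, k1); (i2, k2)] ++ [:: (true, 8*b1); (true, -(8*b1))] ++
        [:: (false, 8*b2); (false, -(8*b2))]).
split.
  move=> j hj; rewrite /= in hj.
  do 6 (case: j hj => [|j] hj; first by rewrite /=; (lra || (rewrite ?normrN normrM !ger0_norm //; lra))).
  by [].
exists (- Num.floor (y.1 - p2.1.1)), (- Num.floor (y.2 - p2.1.2)), l; split => //.
rewrite !run_cat.
have -> : run [:: (i1, k1); (i2, k2)] (x, u) = p2.
  by rewrite /run /= -/p1 {1}e1'.
rewrite P1 // P2 //=.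
rewrite -e2 /b1 /b2 /Defs.frac !intrN.
congr ((_, _), _); match goal with |- ?g => idtac g end; try ring.
Qed.
End D.
Section E.
Variable R : realType.
Local Notation frac := (@Defs.frac R).

Lemma mfloor : measurable_fun setT (fun y : R => (Num.floor y)%:~R : R).
Proof.
apply: nondecreasing_measurable => // x y hxy.
by rewrite ler_int; apply: le_floor.
Qed.

Lemma mfrac : measurable_fun setT frac.
Proof.
rewrite /Defs.frac.
exact: (measurable_funB (@measurable_id _ R setT) mfloor).
Qed.

Lemma mF0 : measurable_fun setT (@F0 R).
Proof.
rewrite /F0.
apply: (measurable_maxr (f := cst 0) (g := fun y => 1 - 8 * `|frac y - 2^-1|)).
  exact: measurable_cst.
apply: (measurable_funB (f := cst 1)); first exact: measurable_cst.
apply: (measurable_funM (f := cst 8)); first exact: measurable_cst.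
apply: measurableT_comp; first exact: normr_measurable.
apply: (measurable_funB (g := cst 2^-1)) => //; exact: mfrac.
Qed.

Lemma mdF0 : measurable_fun setT (@dF0 R).
Proof.
rewrite /dF0.
apply: measurable_fun_ifT; last 2 first.
- exact: measurable_cst.
- apply: measurable_fun_ifT; [|exact: measurable_cst|exact: measurable_cst].
  apply: measurable_and.
  + by apply: (measurable_fun_ler (f := cst 2^-1)); [exact: measurable_cst|exact: mfrac].
  + by apply: (measurable_fun_ltr (g := cst (5/8))); [exact: mfrac|exact: measurable_cst].
apply: measurable_and.
+ by apply: (measurable_fun_ler (f := cst (3/8))); [exact: measurable_cst|exact: mfrac].
+ by apply: (measurable_fun_ltr (g := cst 2^-1)); [exact: mfrac|exact: measurable_cst].
Qed.
Section M.
Context d (Omega : measurableType d).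
Implicit Types f g h : Omega -> R.

Lemma mF f g h : measurable_fun setT f -> measurable_fun setT g -> measurable_fun setT h ->
  measurable_fun setT (fun w => f w + g w * F0 (h w)).
Proof.
move=> mf mg mh; apply: (measurable_funD (f := f)) => //.
apply: (measurable_funM (f := g)) => //.
exact: (measurableT_comp mF0 mh).
Qed.

Lemma mdF f g h k : measurable_fun setT f -> measurable_fun setT g -> measurable_fun setT h ->
  measurable_fun setT k ->
  measurable_fun setT (fun w => f w + g w * dF0 (h w) * k w).
Proof.
move=> mf mg mh mk; apply: (measurable_funD (f := f)) => //.
apply: (measurable_funM (g := k)) => //.
apply: (measurable_funM (f := g)) => //.
exact: (measurableT_comp mdF0 mh).
Qed.

Lemma mproc (alpha beta : nat -> Omega -> R) (idx : nat -> Omega -> bool) z0 :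
  (forall k, measurable_fun setT (alpha k)) ->
  (forall k, measurable_fun setT (beta k)) ->
  (forall k, measurable_fun setT (idx k)) -> forall n,
  [/\ measurable_fun setT (fun w => (proj_process (alpha^~w) (beta^~w) (idx^~w) z0 n).1.1),
      measurable_fun setT (fun w => (proj_process (alpha^~w) (beta^~w) (idx^~w) z0 n).1.2),
      measurable_fun setT (fun w => (proj_process (alpha^~w) (beta^~w) (idx^~w) z0 n).2.1) &
      measurable_fun setT (fun w => (proj_process (alpha^~w) (beta^~w) (idx^~w) z0 n).2.2)].
Proof.
move=> ma mb mi; elim => [|n [m1 m2 m3 m4]].
  by split; exact: measurable_cst.
set f1 := (fun w => _.1.1) in m1; set f2 := (fun w => _.1.2) in m2.
set f3 := (fun w => _.2.1) in m3; set f4 := (fun w => _.2.2) in m4.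
have mal : measurable_fun setT (fun w => f2 w - alpha n w) by exact: measurable_funB.
have mal' : measurable_fun setT (fun w => f1 w - alpha n w) by exact: measurable_funB.
split.
- rewrite (_ : (fun w => _) = fun w => if idx n w then f1 w + beta n w * F0 (f2 w - alpha n w) else f1 w).
    apply: measurable_fun_ifT => //; exact: mF.
  by apply: funext => w /=; rewrite /step /Fa; case: (idx n w).
- rewrite (_ : (fun w => _) = fun w => if idx n w then f2 w else f2 w + beta n w * F0 (f1 w - alpha n w)).
    apply: measurable_fun_ifT => //; exact: mF.
  by apply: funext => w /=; rewrite /step /Fa; case: (idx n w).
- rewrite (_ : (fun w => _) = fun w => if idx n w then f3 w + beta n w * dF0 (f2 w - alpha n w) * f4 w else f3 w).
    apply: measurable_fun_ifT => //; exact: mdF.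
  by apply: funext => w /=; rewrite /step /dFa; case: (idx n w).
- rewrite (_ : (fun w => _) = fun w => if idx n w then f4 w else f4 w + beta n w * dF0 (f1 w - alpha n w) * f3 w).
    apply: measurable_fun_ifT => //; exact: mdF.
  by apply: funext => w /=; rewrite /step /dFa; case: (idx n w).
Qed.
End M.
End E.
Section F.
Variable R : realType.

Lemma ball_R (x y e : R) : ball x e y <-> `|x - y| < e.
Proof. by rewrite -ball_normE. Qed.

Lemma open_ball4 (O : set ((R*R)*(R*R))) p : open O -> O p ->
  exists2 e : R, 0 < e & forall q : (R*R)*(R*R),
    `|p.1.1 - q.1.1| < e -> `|p.1.2 - q.1.2| < e ->
    `|p.2.1 - q.2.1| < e -> `|p.2.2 - q.2.2| < e -> O q.
Proof.
move=> oO Op; have := oO p Op; move/nbhs_ballP => [e /= e0 H].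
exists e => // q h1 h2 h3 h4; apply: H.
by split; split; apply/ball_R.
Qed.

Context d (Omega : measurableType d).

Lemma mlt (f : Omega -> R) (c r : R) : measurable_fun setT f ->
  measurable [set w | `|f w - c| < r].
Proof.
move=> mf.
have mg : measurable_fun setT (fun w => `|f w - c| < r).
  apply: (measurable_fun_ltr (g := cst r)); last exact: measurable_cst.
  apply: measurableT_comp; first exact: normr_measurable.
  apply: (measurable_funB (g := cst c)) => //; exact: measurable_cst.
have := mg measurableT [set true] I; rewrite setTI.
by congr measurable; apply/seteqP; split => w /=.
Qed.

Lemma mopen (f1 f2 f3 f4 : Omega -> R) (O : set ((R*R)*(R*R))) :
  measurable_fun setT f1 -> measurable_fun setT f2 ->
  measurable_fun setT f3 -> measurable_fun setT f4 -> open O ->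
  measurable [set w | O ((f1 w, f2 w), (f3 w, f4 w))].
Proof.
move=> m1 m2 m3 m4 oO.
pose B (q1 q2 q3 q4 r : rat) := [set z : (R*R)*(R*R) |
  [/\ `|z.1.1 - ratr q1| < ratr r, `|z.1.2 - ratr q2| < ratr r,
      `|z.2.1 - ratr q3| < ratr r & `|z.2.2 - ratr q4| < ratr r]].
pose S (q1 q2 q3 q4 r : rat) := [set w | B q1 q2 q3 q4 r `<=` O /\
   B q1 q2 q3 q4 r ((f1 w, f2 w), (f3 w, f4 w))].
have -> : [set w | O ((f1 w, f2 w), (f3 w, f4 w))] =
  \bigcup_q1 \bigcup_q2 \bigcup_q3 \bigcup_q4 \bigcup_r S q1 q2 q3 q4 r.
  apply/seteqP; split => w /=; last first.
    by move=> [q1 _ [q2 _ [q3 _ [q4 _ [r _ [hB hw]]]]]]; apply: hB.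
  move=> Ow; have [e e0 He] := open_ball4 oO Ow.
  have [r /[!in_itv] /= /andP[r1 r2]] := @rat_in_itvoo R (e/4) (e/2) ltac:(lra).
  have [q1 /[!in_itv] /= /andP[a1 a2]] := @rat_in_itvoo R (f1 w - e/4) (f1 w + e/4) ltac:(lra).
  have [q2 /[!in_itv] /= /andP[b1 b2]] := @rat_in_itvoo R (f2 w - e/4) (f2 w + e/4) ltac:(lra).
  have [q3 /[!in_itv] /= /andP[c1 c2]] := @rat_in_itvoo R (f3 w - e/4) (f3 w + e/4) ltac:(lra).
  have [q4 /[!in_itv] /= /andP[d1 d2]] := @rat_in_itvoo R (f4 w - e/4) (f4 w + e/4) ltac:(lra).
  exists q1 => //; exists q2 => //; exists q3 => //; exists q4 => //; exists r => //.
  split.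
    move=> z [/=]; rewrite !ltr_norml => /andP[g1 g1'] /andP[g2 g2'] /andP[g3 g3'] /andP[g4 g4'].
    apply: He; rewrite /= ltr_norml; apply/andP; split; lra.
  by split; rewrite /= ltr_norml; apply/andP; split; lra.
apply: bigcupT_measurable_rat => q1; apply: bigcupT_measurable_rat => q2.
apply: bigcupT_measurable_rat => q3; apply: bigcupT_measurable_rat => q4.
apply: bigcupT_measurable_rat => r.
have [hB|hB] := pselect (B q1 q2 q3 q4 r `<=` O); last first.
  rewrite (_ : S _ _ _ _ _ = set0) //; apply/seteqP; split => w //=.
  by move=> [].
rewrite (_ : S _ _ _ _ _ = [set w | `|f1 w - ratr q1| < ratr r] `&`
   [set w | `|f2 w - ratr q2| < ratr r] `&` [set w | `|f3 w - ratr q3| < ratr r] `&`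
   [set w | `|f4 w - ratr q4| < ratr r]).
  by repeat apply: measurableI; apply: mlt.
apply/seteqP; split => w /=.
  by move=> [_ [/= g1 g2 g3 g4]].
by move=> [[[g1 g2] g3] g4].
Qed.
End F.
Lemma itv_meas (R : realType) (a dl : R) : 0 < dl ->
  fine (lebesgue_measure (`[a, a + dl]%classic : set R)) = dl.
Proof.
move=> dl0; rewrite lebesgue_measure_itv /=.
rewrite lte_fin ltrDl dl0 -EFinD /=; ring.
Qed.
Lemma ub (R : realType) : forall i : bool, unif_bool R [set i] = 1/2.
Proof.
move=> i; rewrite /unif_bool; case: i.
  by rewrite asboolT // asboolF //= addr0.
by rewrite asboolF // asboolT //= add0r.
Qed.

Lemma lo_prop (R : realType) (c dl : R) : 0 <= c <= 1 -> 0 < dl <= 1/2 ->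
  let lo := if c <= 1/2 then c else c - dl in
  (`[lo, lo + dl]%classic `<=` (`[0, 1]%classic : set R)) /\
  (forall z, (`[lo, lo + dl]%classic : set R) z -> `|z - c| <= dl).
Proof.
move=> /andP[c0 c1] /andP[d0 d1] lo; split.
  move=> z /=; rewrite !in_itv /= => /andP[z1 z2]; rewrite /lo in z1 z2.
  by case: ifP z1 z2 => hc z1 z2; apply/andP; split; lra.
move=> z /=; rewrite in_itv /= => /andP[z1 z2]; rewrite /lo in z1 z2.
by rewrite ler_norml; case: ifP z1 z2 => hc z1 z2; apply/andP; split; lra.
Qed.
Theorem lemmaA4 (R : realType) (d : measure_display) (Omega : measurableType d)
    (P : probability Omega R)
    (alpha beta : nat -> Omega -> R) (idx : nat -> Omega -> bool) :
  iid_uniform P alpha beta idx ->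
  forall (x u : R * R), u != (0, 0) ->
  forall O : set ((R * R) * (R * R)), open_TP O -> O !=set0 ->
  exists n : nat,
    (0 < P [set w | O (proj_process (alpha^~ w) (beta^~ w) (idx^~ w) (x, u) n)])%E.
Proof.
move=> [ma mb mi hprod] x u hu O [oO hO2 hsat] [[py pw] Op].
have pw0 : pw != (0,0) := hO2 _ Op.
have [ms [hk [m1 [m2 [l [l0 hrun]]]]]] := plan x py hu pw0.
have Opf : O (run ms (x, u)) by rewrite hrun; apply/(hsat py pw m1 m2 l l0).
have [eps eps0 He] := open_ball4 oO Opf.
set n := size ms.
set M := \sum_(j < n) (`|(exs ms (x,u) j).2.1| + `|(exs ms (x,u) j).2.2|).
have hM : forall j, (j < n)%N ->
    `|(exs ms (x,u) j).2.1| <= M /\ `|(exs ms (x,u) j).2.2| <= M.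
  move=> j hj; rewrite /M (bigD1 (Ordinal hj)) //=.
  have : 0 <= \sum_(i < n | i != Ordinal hj)
     (`|(exs ms (x, u) i).2.1| + `|(exs ms (x, u) i).2.2|).
    by apply: sumr_ge0 => i _; apply: addr_ge0.
  have := normr_ge0 (exs ms (x, u) j).2.1; have := normr_ge0 (exs ms (x, u) j).2.2.
  move=> g1 g2 g3; split; lra.
have M0 : 0 <= M by apply: sumr_ge0 => i _; apply: addr_ge0.
set C := 8*M+18.
have C1 : 1 < C by rewrite /C; lra.
have Cn0 : 0 < C^+n by apply: exprn_gt0; lra.
set m := Num.min (1/64) (eps/2).
have m0 : 0 < m by rewrite /m lt_min; apply/andP; split; lra.
have m1' : m <= 1/64 by rewrite /m ge_min lexx.
have m2' : m <= eps/2 by rewrite /m ge_min lexx orbT.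
set dl := m / C^+n.
have dl0 : 0 < dl by apply: divr_gt0.
have Cdl : C^+n * dl = m by rewrite /dl mulrC divfK // gt_eqF.
have hsmall : forall j, (j < n)%N -> C^+j * dl <= 1/64.
  move=> j hj; apply: le_trans m1'; rewrite -Cdl; apply: ler_wpM2r; first exact: ltW.
  by rewrite (ler_eXn2l C1) ltnW.
have dl1 : dl <= 1/2.
  have : dl <= C^+n * dl.
    rewrite -[X in X <= _]mul1r; apply: ler_wpM2r; first exact: ltW.
    by apply: exprn_ege1; apply: ltW.
  lra.
pose a0 j := a0of (nth (true,0) ms j).1 (nth (true,0) ms j).2 (exs ms (x,u) j).
pose b0 j := `|(nth (true,0) ms j).2| / 8.
pose lo (c : R) := if c <= 1/2 then c else c - dl.
pose A j := (`[lo (a0 j), lo (a0 j) + dl]%classic : set R).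
pose B j := (`[lo (b0 j), lo (b0 j) + dl]%classic : set R).
pose Cs j := [set (nth (true,0) ms j).1].
have ha0 : forall j, 0 <= a0 j <= 1.
  move=> j; have /andP[g1 g2] := frac_bounds (R := R) ((if (nth (true, 0) ms j).1
      then (exs ms (x, u) j).1.2 else (exs ms (x, u) j).1.1) - tz R (0 <= (nth (true, 0) ms j).2)).
  by rewrite /a0 /a0of; apply/andP; split; lra.
have hb0 : forall j, (j < n)%N -> 0 <= b0 j <= 1.
  move=> j hj; have := hk j hj; have := normr_ge0 (nth (true, 0) ms j).2.
  by rewrite /b0 => g1 g2; apply/andP; split; lra.
have dlP : 0 < dl <= 1/2 by apply/andP; split.
pose Rect := \bigcap_(k in `I_n) [set w | A k (alpha k w) /\ B k (beta k w) /\ Cs k (idx k w)].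
have mRect : measurable Rect.
  apply: bigcap_measurableType => k _.
  rewrite (_ : [set w | _] = (setT `&` alpha k @^-1` A k) `&`
     ((setT `&` beta k @^-1` B k) `&` (setT `&` idx k @^-1` Cs k))).
    apply: measurableI; first by apply: ma => //; exact: measurable_itv.
    apply: measurableI; first by apply: mb => //; exact: measurable_itv.
    by apply: mi.
  by apply/seteqP; split => w /=; [move=> [g1 [g2 g3]] | move=> [[_ g1] [[_ g2] [_ g3]]]].
have PR : (0 < P Rect)%E.
  rewrite /Rect hprod; last 2 first.
  - move=> k; exact: measurable_itv.
  - move=> k; exact: measurable_itv.
  rewrite lte_fin; apply: prodr_gt0 => k _.
  have -> : A k `&` `[0,1]%classic = A k by apply: setIidl; exact: (lo_prop (ha0 k) dlP).1.
  have -> : B k `&` `[0,1]%classic = B k.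
    by apply: setIidl; exact: (lo_prop (hb0 k (ltn_ord k)) dlP).1.
  rewrite !itv_meas // ub.
  by apply: mulr_gt0; [apply: mulr_gt0 | lra].
exists n.
apply: (lt_le_trans PR); apply: le_measure; rewrite ?inE //.
  have [f1 f2 f3 f4] := mproc (x, u) ma mb mi n.
  have := mopen f1 f2 f3 f4 oO; congr measurable; apply/seteqP; split => w /=;
  by case: (proj_process _ _ _ _ _) => [[? ?] [? ?]].
move=> w hw /=.
have hpar : forall j, (j < n)%N ->
   [/\ `|alpha j w - a0of (nth (true,0) ms j).1 (nth (true,0) ms j).2 (exs ms (x,u) j)| <= dl,
       `|beta j w - `|(nth (true,0) ms j).2|/8| <= dl &
       idx j w = (nth (true,0) ms j).1].
  move=> j hj; have [hA [hB hC]] := hw j hj; split => //.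
  - exact: (lo_prop (ha0 j) dlP).2 _ hA.
  - exact: (lo_prop (hb0 j hj) dlP).2 _ hB.
have := chain (al := alpha^~w) (be := beta^~w) (id := idx^~w) M0 (ltW dl0) hk hM hsmall hpar (leqnn n).
rewrite -/C Cdl /exs take_size.
case=> g1 g2 g3 g4; apply: He; rewrite distrC; lra.
Qed.
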